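(* Let $T \geq 1$, let $\mathbf{u}$ be an input, and let $h_1, \dots, h_T$ be deterministic functions, where $h_t$ takes as arguments $\mathbf{u}$ and states $\mathbf{s}_1, \dots, \mathbf{s}_{t-1}$ and returns a state. Let $\mathbf{s}^*_1, \dots, \mathbf{s}^*_T$ be the values produced by feedforward computation, i.e. $\mathbf{s}^*_t = h_t(\mathbf{u}, \mathbf{s}^*_{1:t-1})$ for $t = 1, \dots, T$. Let $\mathcal{B}_1 = [\![a_1,b_1]\!], \dots, \mathcal{B}_M = [\![a_M,b_M]\!]$ be integer intervals partitioning $\{1, \dots, T\}$, listed in increasing order ($a_1 = 1$, $a_{i+1} = b_i + 1$, $b_M = T$). Let $\epsilon \ge 0$ and consider the two algorithms: (Jacobi-Gauss-Seidel) Initialize arbitrary $\mathbf{s}^0_1,\dots,\mathbf{s}^0_T$, set $k \gets 0$; repeat { $k \gets k+1$; for all $i = 1,\dots,M$ in parallel, with $[\![a,b]\!] = \mathcal{B}_i$, for $j = a, a+1, \dots, b$ sequentially set $\mathbf{s}^k_j \gets h_j(\mathbf{u}, \mathbf{s}^{k-1}_{1:a-1}, \mathbf{s}^k_{a:j-1})$ } until $k = M$ or $\|\mathbf{s}^k_{1:T} - \mathbf{s}^{k-1}_{1:T}\| < \epsilon$; return $\mathbf{s}^k_1, \dots, \mathbf{s}^k_T$. (Gauss-Seidel-Jacobi) Initialize $\mathbf{s}_1, \dots, \mathbf{s}_T$ arbitrarily; for $i = 1, \dots, M$ sequentially: with $[\![a,b]\!] = \mathcal{B}_i$, initialize arbitrary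 $\mathbf{s}^0_j$ for $j \in \mathcal{B}_i$ and set $k \gets 0$; repeat { $k \gets k+1$; for all $j \in \mathcal{B}_i$ in parallel set $\mathbf{s}^k_j \gets h_j(\mathbf{u}, \mathbf{s}_{1:a-1}, \mathbf{s}^{k-1}_{a:j-1})$ } until $k = |\mathcal{B}_i|$ or $\|\mathbf{s}^k_{\mathcal{B}_i} - \mathbf{s}^{k-1}_{\mathcal{B}_i}\| < \epsilon$; then set $\mathbf{s}_{\mathcal{B}_i} \gets \mathbf{s}^k_{\mathcal{B}_i}$. Finally return $\mathbf{s}_1, \dots, \mathbf{s}_T$. If $\epsilon = 0$, then for any initialization both algorithms converge and return $\mathbf{s}^*_1, \dots, \mathbf{s}^*_T$, the same values as obtained by feedforward computation.
   Context: Notation: $\mathbf{s}_{a:b}$ denotes $\mathbf{s}_a, \dots, \mathbf{s}_b$ (empty if $b<a$); $[\![a,b]\!] = \{a, a+1, \dots, b\}$; $\mathbf{s}_{\mathcal{B}}$ denotes $\{\mathbf{s}_i : i \in \mathcal{B}\}$. States lie in normed vector spaces and $\|\cdot\|$ is a norm on the relevant collection of states. *)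

(* Defs.v *)
From mathcomp Require Import all_boot all_order all_algebra.
Set Implicit Arguments. Unset Strict Implicit. Unset Printing Implicit Defensive.
Import Order.TTheory GRing.Theory Num.Theory.
Local Open Scope ring_scope.

(* States are indexed by positive naturals t = 1, 2, ...; the state s_t lives
   in the additive group S t.  A "collection of states" is a dependent function
   x : forall l, S l (only entries 1..T are meaningful).
   h t v x is the function h_t(v, x_{1:t-1}); that it depends only on x_1..x_{t-1}
   is a hypothesis of the theorem.
   Nrm B x is the norm of the sub-collection x_B (B a list of indices). *)

Section Algorithms.
Variables (R : numDomainType) (S : nat -> zmodType) (U : Type).
Variable h : forall t : nat, U -> (forall l, S l) -> S t.
Variable Nrm : seq nat -> (forall l, S l) -> R.
Variables (u : U) (eps : R) (T M : nat) (a b : nat -> nat).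

Local Notation state := (forall l : nat, S l).

Definition interval (p q : nat) : seq nat := iota p (q.+1 - p).

Definition sdiff (y x : state) : state := fun l => y l - x l.

Definition overwrite (p q : nat) (y x : state) : state :=
  fun l => if (p <= l <= q)%N then y l else x l.

(* one block [[p,q]], sequential inside: s^k_j <- h_j(u, s^{k-1}_{1:p-1}, s^k_{p:j-1}),
   x = s^{k-1} *)
Definition jgs_block (x : state) (p q : nat) : state :=
  foldl (fun z j => @dfwith nat S z j
            (h j u (fun l => if (l < p)%N then x l else z l)))
        x (interval p q).

(* all blocks in parallel (each reads only s^{k-1} on indices before it) *)
Definition jgs_sweep (x : state) : state :=
  foldl (fun y i => overwrite (a i) (b i) (jgs_block x (a i) (b i)) y)
        x (iota 1 M).

(* repeat ... until k = M or ||s^k_{1:T} - s^{k-1}_{1:T}|| < eps ;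
   fuel = number of iterations still allowed *)
Fixpoint jgs_loop (fuel : nat) (x : state) : state :=
  match fuel with
  | 0%N => x
  | n.+1 => let y := jgs_sweep x in
            if Nrm (interval 1 T) (sdiff y x) < eps then y else jgs_loop n y
  end.

Definition JGS (s0 : state) : state := jgs_loop M s0.

(* parallel Jacobi step on block [[p,q]]:
   s^k_j <- h_j(u, s_{1:p-1}, s^{k-1}_{p:j-1}),  z = s^{k-1} *)
Definition gsj_step (s : state) (p q : nat) (z : state) : state :=
  fun l => if (p <= l <= q)%N
           then h l u (fun m => if (m < p)%N then s m else z m)
           else z l.

Fixpoint gsj_loop (s : state) (p q : nat) (fuel : nat) (z : state) : state :=
  match fuel with
  | 0%N => z
  | n.+1 => let y := gsj_step s p q z in
            if Nrm (interval p q) (sdiff y z) < eps then y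
            else gsj_loop s p q n y
  end.

(* s0 : initial s ; z0 i : the arbitrary initialization s^0 used for block i *)
Definition GSJ (s0 : state) (z0 : nat -> state) : state :=
  foldl (fun s i =>
           overwrite (a i) (b i)
             (gsj_loop s (a i) (b i) ((b i).+1 - a i) (z0 i)) s)
        s0 (iota 1 M).

End Algorithms.

(* Main.v *)
Require Import Defs.
From mathcomp Require Import all_boot all_order all_algebra.
From mathcomp Require Import zify.
Import Order.TTheory GRing.Theory Num.Theory.
Local Open Scope ring_scope.

Theorem proposition2 (R : numDomainType) (S : nat -> zmodType) (U : Type)
  (T : nat) (u : U) (h : forall t : nat, U -> (forall l, S l) -> S t)
  (sstar : forall l, S l) (M : nat) (a b : nat -> nat)
  (Nrm : seq nat -> (forall l, S l) -> R) :
  (1 <= T)%N ->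
  (* h_t depends only on its input and on s_1, ..., s_{t-1} *)
  (forall t v (x y : forall l, S l),
      (forall l, (1 <= l < t)%N -> x l = y l) -> h t v x = h t v y) ->
  (* feedforward values *)
  (forall t, (1 <= t <= T)%N -> sstar t = h t u sstar) ->
  (* the blocks [[a_i, b_i]], i = 1..M, partition [[1, T]] in increasing order *)
  (0 < M)%N -> a 1%N = 1%N ->
  (forall i, (1 <= i < M)%N -> a i.+1 = (b i).+1) -> b M = T ->
  (forall i, (1 <= i <= M)%N -> (a i <= b i)%N) ->
  (* the norm on collections of states is nonnegative *)
  (forall B x, 0 <= Nrm B x) ->
  (forall s0 : forall l, S l, forall t, (1 <= t <= T)%N ->
      JGS h Nrm u 0 T M a b s0 t = sstar t) /\
  (forall (s0 : forall l, S l) (z0 : nat -> forall l, S l) t, (1 <= t <= T)%N ->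
      GSJ h Nrm u 0 M a b s0 z0 t = sstar t).
Proof.
move=> T1 hdep hff M0 a1 ab bM aleb Nge0.
pose c n := if n is k.+1 then b k.+1 else 0%N.
have ac : forall n, (n < M)%N -> a n.+1 = (c n).+1.
  by case=> [|n] Hn //=; rewrite ab //; lia.
have cS : forall n, (n < M)%N -> (c n < c n.+1)%N.
  move=> n Hn; have := ac n Hn; have := aleb n.+1; rewrite /= => H1 H2.
  rewrite -H2 H1 //; lia.
have cmono : forall i j, (i <= j <= M)%N -> (c i <= c j)%N.
  move=> i j /andP[]; elim: j => [|j IH]; first by rewrite leqn0 => /eqP->.
  rewrite leq_eqVlt => /orP[/eqP->//|Hij] HM.
  have := IH Hij (ltnW HM); have := cS j HM; lia.
have cM : c M = T by case: M M0 bM {ac cS cmono ab aleb} => //.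
have hok : forall t x, (1 <= t <= T)%N ->
    (forall l, (1 <= l < t)%N -> x l = sstar l) -> h t u x = sstar t.
  by move=> t x Ht Hx; rewrite (hff t Ht); apply: hdep.
have ai1 : forall i, (1 <= i <= M)%N -> a i = (c i.-1).+1.
  by case=> [|i] Hi //; rewrite ac //=; lia.
have biT : forall i, (1 <= i <= M)%N -> (b i <= T)%N.
  case=> [|i] Hi //; rewrite -cM; have := cmono i.+1 M; rewrite /=; apply; lia.
have disj : forall i j, (1 <= i)%N -> (i < j <= M)%N -> (b i < a j)%N.
  move=> i [|j] // Hi Hij; rewrite ai1; last lia.
  have := cmono i j; rewrite /=; case: i Hi Hij => // i _ Hij /=.
  move=> H; have := H ltac:(lia); lia.
have exblk : forall n l, (n <= M)%N -> (1 <= l <= c n)%N ->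
    exists i, [/\ (1 <= i <= n)%N, (a i <= l)%N & (l <= b i)%N].
  elim=> [|n IH] l Hn Hl; first by move: Hl => /=; lia.
  have [Hlc|Hlc] := leqP l (c n).
    have [i [Hi1 Hi2 Hi3]] := IH l (ltnW Hn) ltac:(lia).
    exists i; split => //; lia.
  exists n.+1; split => //; first lia.
    by rewrite ac //.
  by move: Hl => /=; lia.
have fold_blocks : forall (G : nat -> forall l, S l) y0 n i l, (n <= M)%N ->
    (1 <= i <= n)%N -> (a i <= l <= b i)%N ->
    foldl (fun y i => overwrite (a i) (b i) (G i) y) y0 (iota 1 n) l = G i l.
  move=> G y0; elim=> [|n IH] i l Hn Hi Hl; first lia.
  have -> : iota 1 n.+1 = iota 1 n ++ [:: n.+1] by have := iotaD 1 n 1; rewrite addn1 add1n => ->.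
  rewrite foldl_cat /= {1}/overwrite.
  case: ifP => Hl2.
    have -> : i = n.+1; last by [].
    case: (ltnP i n.+1) => Hin; last lia.
    have := disj i n.+1 ltac:(lia) ltac:(lia); lia.
  case: (ltnP i n.+1) => Hin.
    by apply: IH => //; lia.
  have Hi' : i = n.+1 by lia.
  by move: Hl; rewrite Hi' Hl2.
split.
-
  have blk : forall x p q, (1 <= p)%N -> (q <= T)%N ->
      (forall l, (1 <= l < p)%N -> x l = sstar l) ->
      forall l, (p <= l <= q)%N -> jgs_block h u x p q l = sstar l.
    move=> x p q Hp Hq Hx.
    have gen : forall n m z, (p <= m)%N -> (m + n <= q.+1)%N ->
        (forall l, (p <= l < m)%N -> z l = sstar l) ->
        forall l, (p <= l < m + n)%N ->
        foldl (fun z j => @dfwith nat S z j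
            (h j u (fun l => if (l < p)%N then x l else z l))) z (iota m n) l
          = sstar l.
      elim=> [|n IH] m z Hm Hmn Hz l Hl /=; first by apply: Hz; lia.
      apply: IH; [lia|lia| |lia].
      move=> l' Hl'; case: (eqVneq m l') => [<-|Hj].
        rewrite dfwith_in; apply: hok; first lia.
        move=> l2 Hl2; case: ifP => H2; [apply: Hx|apply: Hz]; lia.
      rewrite dfwith_out //; move/eqP: Hj => Hj; apply: Hz; lia.
    move=> l Hl; rewrite /jgs_block /interval; apply: gen => //; lia.
  have sweep : forall k x, (k < M)%N ->
      (forall l, (1 <= l <= c k)%N -> x l = sstar l) ->
      forall l, (1 <= l <= c k.+1)%N -> jgs_sweep h u M a b x l = sstar l.
    move=> k x Hk Hx l Hl.
    have [i [Hi1 Hi2 Hi3]] := exblk k.+1 l Hk Hl.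
    rewrite /jgs_sweep (fold_blocks _ _ M i l) //; last lia; last lia.
    apply: blk; [rewrite ai1; lia | apply: biT; lia | | lia].
    move=> l' Hl'; apply: Hx; rewrite ai1 in Hl'; last lia.
    have := cmono i.-1 k; lia.
  have loop : forall n k x, (k + n <= M)%N ->
      (forall l, (1 <= l <= c k)%N -> x l = sstar l) ->
      forall l, (1 <= l <= c (k + n))%N -> jgs_loop h Nrm u 0 T M a b n x l = sstar l.
    elim=> [|n IH] k x Hkn Hx l Hl /=; first by apply: Hx; rewrite addn0 in Hl.
    rewrite le_gtF ?Nge0 //=.
    apply: (IH k.+1); [lia| |by rewrite addSnnS].
    by apply: sweep => //; lia.
  move=> s0 t Ht; rewrite /JGS; apply: (loop M 0%N) => //; first by move=> l /=; lia.
  by rewrite add0n cM.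
-
  have gl : forall s p q, (1 <= p)%N -> (q <= T)%N ->
      (forall l, (1 <= l < p)%N -> s l = sstar l) ->
      forall n z k, (forall l, (p <= l < p + k)%N -> (l <= q)%N -> z l = sstar l) ->
      forall l, (p <= l < p + k + n)%N -> (l <= q)%N ->
      gsj_loop h Nrm u 0 s p q n z l = sstar l.
    move=> s p q Hp Hq Hs; elim=> [|n IH] z k Hz l Hl Hlq /=.
      by apply: Hz; lia.
    rewrite le_gtF ?Nge0 //=.
    apply: (IH _ k.+1); [|lia|done].
    move=> l' Hl'; rewrite /gsj_step.
    move=> Hl'q; case: ifP => H; last lia.
    apply: hok; first lia.
    move=> m Hm; case: ifP => Hm2; [apply: Hs|apply: Hz]; lia.
  move=> s0 z0 t Ht; rewrite /GSJ.
  have P : forall n, (n <= M)%N -> forall l, (1 <= l <= c n)%N ->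
      foldl (fun s i => overwrite (a i) (b i)
             (gsj_loop h Nrm u 0 s (a i) (b i) ((b i).+1 - a i) (z0 i)) s)
        s0 (iota 1 n) l = sstar l.
    elim=> [|n IH] Hn l Hl; first by move: Hl => /=; lia.
    have -> : iota 1 n.+1 = iota 1 n ++ [:: n.+1] by have := iotaD 1 n 1; rewrite addn1 add1n => ->.
    rewrite foldl_cat /= {1}/overwrite.
    have Han := ac n Hn.
    case: ifP => H.
      apply: (gl _ _ _ _ _ _ _ _ 0%N); [lia|apply: biT; lia| | |lia|lia].
        by move=> l' Hl'; apply: IH; lia.
      by move=> l'; lia.
    apply: IH; first lia.
    move: Hl H => /=; rewrite Han; lia.
  by apply: (P M) => //; rewrite cM.
Qed.
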